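(* Let $p>2$, $\mathcal{G}\in\mathbf{G}$, and let $u\in H^1(\mathcal{G})$, $u>0$ on $\mathcal G$, solve $u''+u^{p-1}=\lambda u$ on every edge for some $\lambda\in\mathbb{R}$, with the Kirchhoff condition at every vertex. Then \[ \|u\|_{L^\infty(\mathcal G)}\le\left(\frac p2\lambda+\frac{p\pi^2}{2e_0^2}\right)^{\frac1{p-2}} . \]
   Context: $\mathbf{G}$: connected metric graphs with at most countably many edges, finite vertex degrees and $e_0:=\inf_{e}|e|>0$ (the infimum of the edge lengths). Kirchhoff condition: at each vertex the sum of the outgoing derivatives of $u$ along incident edges is zero. *)

(* Defs.v *)
From HB Require Import structures.
From mathcomp Require Import all_boot all_order all_algebra.
From mathcomp Require Import all_classical all_reals all_analysis.
From Stdlib Require Import Relations.Relation_Operators.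
Set Implicit Arguments. Unset Strict Implicit. Unset Printing Implicit Defensive.
Import Order.TTheory GRing.Theory Num.Theory.
Import numFieldNormedType.Exports.
Local Open Scope classical_set_scope.
Local Open Scope ring_scope.

(* A metric graph is encoded by a vertex type V, a countable edge type E,
   edge lengths len e in (0, +oo] (len e = +oo : half-line), an origin
   vertex orig e for each edge, and a terminal vertex term e (only meaningful
   when len e < +oo).  Edge e is identified with the interval
   [0, len e] (resp. [0, +oo)), x = 0 at orig e, x = len e at term e.
   Loops and multiple edges are allowed. *)

Section Graphs.
Variables (R : realType) (V : Type) (E : countType).
Variables (len : E -> \bar R) (orig term : E -> V).

Definition edge_set (e : E) : set R := [set x | 0 <= x /\ (x%:E <= len e)%E].
Definition edge_int (e : E) : set R := [set x | 0 < x /\ (x%:E < len e)%E].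

Definition adjacent (v w : V) : Prop :=
  exists e, (len e < +oo)%E /\
    ((orig e = v /\ term e = w) \/ (orig e = w /\ term e = v)).

Definition graph_connected : Prop :=
  forall v w : V, clos_refl_trans V adjacent v w.

Definition e0 : \bar R := ereal_inf [set len e | e in [set: E]].

Definition in_class_G : Prop :=
  [/\ [set: E] !=set0,
      (forall e, (0 < len e)%E),
      graph_connected,
      (forall v, finite_set [set e | orig e = v] /\
                 finite_set [set e | (len e < +oo)%E /\ term e = v]) &
      (0 < e0)%E].

Definition right_deriv (f : R -> R) (a d : R) : Prop :=
  (fun h => h^-1 * (f (a + h) - f a)) @ 0^'+ --> d.
Definition left_deriv (f : R -> R) (a d : R) : Prop :=
  (fun h => h^-1 * (f a - f (a - h))) @ 0^'+ --> d.

Variable u : E -> R -> R.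

(* u is an H^1(G) function: continuous on each closed edge, continuous at
   the vertices, and sum over edges of (||u_e||_2^2 + ||u_e'||_2^2) finite.
   (u is assumed differentiable in the interior of the edges, see below.) *)
Definition H1_graph : Prop :=
  [/\ (forall e, {within edge_set e, continuous (u e)}),
      (exists phi : V -> R, forall e, u e 0 = phi (orig e) /\
          ((len e < +oo)%E -> u e (fine (len e)) = phi (term e))) &
      (\esum_(e in [set: E])
         (\int[lebesgue_measure]_(x in edge_set e)
            ((u e x) ^+ 2 + (derive1 (u e) x) ^+ 2)%:E) < +oo)%E].

Definition solves_NLS (p lambda : R) : Prop :=
  forall e x, edge_int e x ->
    [/\ derivable (u e) x 1, derivable (derive1 (u e)) x 1 &
        derive1 (derive1 (u e)) x + (u e x) `^ (p - 1) = lambda * u e x].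

(* Kirchhoff condition: sum of outgoing derivatives at each vertex is 0.
   Outgoing derivative at the origin of e is u_e'(0+), at the terminal
   vertex it is -u_e'(len e -). *)
Definition kirchhoff : Prop :=
  exists d0 d1 : E -> R,
    [/\ (forall e, right_deriv (u e) 0 (d0 e)),
        (forall e, (len e < +oo)%E -> left_deriv (u e) (fine (len e)) (d1 e)) &
        (forall v, (\sum_(e \in [set e | orig e = v]) d0 e
                   - \sum_(e \in [set e | (len e < +oo)%E /\ term e = v]) d1 e)
                   = 0)].

End Graphs.

(* Main.v *)
Require Import Defs.
From HB Require Import structures.
From mathcomp Require Import all_boot all_order all_algebra.
From mathcomp Require Import all_classical all_reals all_analysis.
From mathcomp Require Import ring lra.
Import Order.TTheory GRing.Theory Num.Theory.
Import numFieldNormedType.Exports.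
Local Open Scope classical_set_scope.
Local Open Scope ring_scope.
Lemma within_le (R : realType) (h : R -> R) a b C : a < b ->
  {within `[a, b], continuous h} ->
  (forall x, x \in `]a, b[ -> h x <= C) -> forall x, x \in `[a, b] -> h x <= C.
Proof.
move=> ab hc hC x; rewrite in_itv /= => /andP[ax xb].
have [_ ha hb] := (continuous_within_itvP _ ab).1 hc.
case: (ltgtP a x) ax => // [ax' _|<- _].
  case: (ltgtP x b) xb => // [xb' _|-> _].
    by apply: hC; rewrite in_itv /= ax' xb'.
  rewrite leNgt; apply/negP => Cb.
  have [t [t1 [t2 t3]]] : exists t, C < h t /\ a < t /\ t < b.
    apply: (@filter_ex _ (b^'-)); near=> t; split; last split.
    - by near: t; exact: (cvgr_gt _ hb).
    - by near: t; exact: nbhs_left_gt.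
    - by near: t; exact: nbhs_left_lt.
  by have := hC t; rewrite in_itv /= t2 t3 => /(_ isT); rewrite leNgt t1.
rewrite leNgt; apply/negP => Cb.
have [t [t1 [t2 t3]]] : exists t, C < h t /\ a < t /\ t < b.
  apply: (@filter_ex _ (a^'+)); near=> t; split; last split.
  - by near: t; exact: (cvgr_gt _ ha).
  - by near: t; exact: nbhs_right_gt.
  - by near: t; exact: nbhs_right_lt.
by have := hC t; rewrite in_itv /= t2 t3 => /(_ isT); rewrite leNgt t1.
Unshelve. all: by end_near. Qed.
Lemma ooW {R : realType} {a b x : R} : x \in `]a, b[ -> x \in `[a, b].
Proof. by rewrite !in_itv /= => /andP[/ltW -> /ltW ->]. Qed.

Section Core.
Variables (R : realType) (f : R -> R) (L p lam : R).
Hypothesis Lpos : 0 < L.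
Hypothesis p2 : 2 < p.
Hypothesis fc : {within `[0, L], continuous f}.
Hypothesis fd : forall x, x \in `]0, L[ -> derivable f x 1.
Hypothesis fdd : forall x, x \in `]0, L[ -> derivable (derive1 f) x 1.
Hypothesis fode : forall x, x \in `]0, L[ ->
  derive1 (derive1 f) x + f x `^ (p - 1) = lam * f x.
Hypothesis fpos : forall x, x \in `[0, L] -> 0 < f x.

Definition En x := derive1 f x ^+ 2 + (2 / p) * f x `^ p - lam * f x ^+ 2.

Lemma oo_cc {x} : x \in `]0, L[ -> x \in `[0, L].
Proof. by rewrite !in_itv /= => /andP[/ltW -> /ltW ->]. Qed.

Lemma En_deriv {x} : x \in `]0, L[ -> is_derive x 1 En 0.
Proof.
move=> xI.
have fx0 := fpos _ (oo_cc xI).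
have d1 : is_derive x 1 f (derive1 f x).
  by rewrite derive1E; apply: derivableP; exact: fd.
have d2 : is_derive x 1 (derive1 f) (derive1 (derive1 f) x).
  by rewrite derive1E; apply: derivableP; exact: fdd.
have d3 : is_derive x 1 ((@powR R ^~ p) \o f) (p * f x `^ (p - 1) * derive1 f x).
  have dc : derivable ((@powR R ^~ p) \o f) x 1.
    apply/derivable1_diffP; apply: differentiable_comp.
      exact/derivable1_diffP/fd.
    by apply/derivable1_diffP; apply: ex_derive; exact: is_derive1_powR.
  apply: DeriveDef => //.
  rewrite -derive1E derive1_comp; [|exact: fd|].
    by rewrite powR_derive1 // in_itv /= andbT.
  by apply: ex_derive; exact: is_derive1_powR.
have -> : En = ((derive1 f) ^+ 2) + (2 / p) \*: ((@powR R ^~ p) \o f) - lam \*: (f ^+ 2).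
  apply/funext => y; rewrite /En /=.
  by [].
apply: (is_derive_eq (is_deriveB (is_deriveD (is_deriveX 2 d2) (is_deriveZ (2/p) d3)) (is_deriveZ lam (is_deriveX 2 d1)))).
rewrite /=.
move: (fode _ xI).
set a := derive1 (derive1 f) x; set b := derive1 f x; set c := f x `^ (p - 1).
move=> E; have {E}-> : a = lam * f x - c by rewrite -E addrK.
have p0 : p != 0 by rewrite gt_eqF // (lt_trans _ p2).
rewrite !expr1 -!mulrA.
rewrite -![_ *: _]/(_ * _).
field.
exact: p0.
Qed.


Lemma sub_oo {a b x} : a \in `]0, L[ -> b \in `]0, L[ -> x \in `[a, b] -> x \in `]0, L[.
Proof.
rewrite !in_itv /= => /andP[a0 aL] /andP[b0 bL] /andP[ax xb].
by rewrite (lt_le_trans a0 ax) (le_lt_trans xb bL).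
Qed.

Lemma En_const {x y} : x \in `]0, L[ -> y \in `]0, L[ -> En x = En y.
Proof.
wlog xy : x y / x <= y.
  move=> H xI yI; case: (leP x y) => [/H|/ltW /H]; first exact.
  by move=> /(_ yI xI).
move=> xI yI; case: (ltgtP x y) xy => // [xy' _|-> //].
have cE : {within `[x, y], continuous En}.
  apply: derivable_within_continuous => z zI.
  by apply: ex_derive; exact: En_deriv (sub_oo xI yI zI).
have [c _ ] := @MVT _ En (fun=> 0) x y xy' (fun z zI => En_deriv (sub_oo xI yI (ooW zI))) cE.
by move/eqP; rewrite mul0r subr_eq0 => /eqP.
Qed.

Lemma midI : L / 2 \in `]0, L[.
Proof. by have := mid_in_itvoo Lpos; rewrite add0r. Qed.

Definition G x := 2 / p * f x `^ p - lam * f x ^+ 2.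

Lemma G_cont : {within `[0, L], continuous G}.
Proof.
apply/subspace_continuousP => x xI.
have xI' : x \in `[0, L] by [].
have fx0 := fpos _ xI'.
have hc : {for f x, continuous (fun y : R => 2 / p * y `^ p - lam * y ^+ 2)}.
  have hd : derivable ((2 / p) \*: (@powR R ^~ p) - lam \*: ((@id R) ^+ 2)) (f x) 1.
    apply: derivableB; apply: derivableZ.
      by apply: ex_derive; exact: is_derive1_powR.
    by apply: derivableX; exact: derivable_id.
  by move/derivable1_diffP/differentiable_continuous: hd.
apply: (continuous_cvg _ hc).
exact: (@subspace_continuousP _ `[0, L]%classic _ f).1 fc x xI.
Qed.

Lemma G_le_En {x} : x \in `]0, L[ -> G x <= En x.
Proof. by move=> _; rewrite /En /G -addrA lerDr sqr_ge0. Qed.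

Lemma E2 {x} : x \in `[0, L] -> G x <= En (L / 2).
Proof.
apply: (@within_le _ G 0 L _ Lpos G_cont) => y yI.
by rewrite -(En_const yI midI); exact: G_le_En.
Qed.

Lemma powsplit {y} : 0 < y -> y `^ p = y `^ (p - 2) * y ^+ 2.
Proof.
move=> y0.
by rewrite -powR_mulrn ?ltW // -powRD ?(gt_eqF y0) ?implybT // subrK.
Qed.

Section Max.
Variable xs : R.
Hypothesis xsI : xs \in `[0, L].
Hypothesis xsmax : forall t, t \in `[0, L] -> f t <= f xs.
Let M := f xs.
Let K := 2 / p * M `^ (p - 2) - lam.
Hypothesis Kpos : 0 < K.
Hypothesis KL : pi ^+ 2 < K * L ^+ 2.

Lemma M0 : 0 < M. Proof. exact: fpos. Qed.

Lemma Dineq {x} : x \in `]0, L[ -> K * (M ^+ 2 - f x ^+ 2) <= derive1 f x ^+ 2.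
Proof.
move=> xI.
have E := E2 xsI.
have Ex := En_const xI midI.
have fx0 := fpos _ (oo_cc xI).
have fxM : f x <= M := xsmax _ (oo_cc xI).
have p20 : 0 <= p - 2 by rewrite subr_ge0 ltW.
have pw : f x `^ (p - 2) <= M `^ (p - 2).
  by apply: ge0_ler_powR => //; rewrite nnegrE ltW // M0.
move: E; rewrite /G -Ex /En (powsplit fx0) (powsplit M0) => E.
have p0 : 0 < 2 / p by rewrite divr_gt0 // (lt_trans _ p2).
have h : 2 / p * (f x `^ (p - 2) * f x ^+ 2) <= 2 / p * (M `^ (p - 2) * f x ^+ 2).
  by apply: ler_wpM2l; [exact: ltW | apply: ler_wpM2r; [exact: sqr_ge0 | exact: pw]].
rewrite /K; move: E h.
set a := f x `^ (p - 2); set b := M `^ (p - 2); set c := 2 / p.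
move=> E h; rewrite -/M in E; lra.
Qed.


Lemma powsplit1 {y} : 0 < y -> y `^ (p - 1) = y `^ (p - 2) * y.
Proof.
move=> y0; rewrite -[X in _ * X](powRr1 (ltW y0)) -powRD ?(gt_eqF y0) ?implybT //.
by congr (_ `^ _); ring.
Qed.

Lemma sub_cc {a b} : 0 <= a -> b <= L -> [set` `[a, b]] `<=` [set` `[0, L]].
Proof.
move=> a0 bL z; rewrite /= !in_itv /= => /andP[az zb].
by rewrite (le_trans a0 az) (le_trans zb bL).
Qed.

Lemma sub_oo2 {a b z} : 0 <= a -> b <= L -> z \in `]a, b[ -> z \in `]0, L[.
Proof.
move=> a0 bL; rewrite !in_itv /= => /andP[az zb].
by rewrite (le_lt_trans a0 az) (lt_le_trans zb bL).
Qed.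

Lemma sub_cc2 {a b z} : 0 < a -> b < L -> z \in `[a, b] -> z \in `]0, L[.
Proof.
move=> a0 bL; rewrite !in_itv /= => /andP[az zb].
by rewrite (lt_le_trans a0 az) (le_lt_trans zb bL).
Qed.

Lemma ccL {a} : a \in `[0, L] -> 0 <= a /\ a <= L.
Proof. by rewrite in_itv /= => /andP[]. Qed.

Lemma Z1 {a b} : a < b -> a \in `[0, L] -> b \in `[0, L] ->
  (forall x, x \in `]a, b[ -> f x = M) -> False.
Proof.
move=> ab /ccL[a0 aL] /ccL[b0 bL] fM.
have sub z : z \in `]a, b[ -> z \in `]0, L[ by exact: sub_oo2.
have d0 z : z \in `]a, b[ -> derive1 f z = 0.
  move=> zI; rewrite derive1E (@near_eq_derive _ _ _ f (cst M) z 1).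
    exact: derive_cst.
  near=> w; apply: fM; near: w; exact: near_in_itvoo zI.
have yI := mid_in_itvoo ab.
have dd0 : derive1 (derive1 f) ((a + b) / 2) = 0.
  rewrite derive1E (@near_eq_derive _ _ _ (derive1 f) (cst 0) _ 1).
    exact: derive_cst.
  near=> w; apply: d0; near: w; exact: near_in_itvoo yI.
have := fode _ (sub _ yI); rewrite dd0 add0r fM // (powsplit1 M0).
have Mn0 : M != 0 by rewrite gt_eqF // M0.
move/(mulIf Mn0) => qE.
have q0 : 0 < M `^ (p - 2) by apply: powR_gt0; exact: M0.
have p0 : 0 < p by rewrite (lt_trans _ p2).
have p1 : 2 / p < 1 by rewrite ltr_pdivrMr // mul1r.
have := Kpos; rewrite /K qE => Kp.
rewrite -qE in Kp; nra.
Unshelve. all: by end_near. Qed.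

Lemma dip {a b} : a < b -> a \in `[0, L] -> b \in `[0, L] -> f a = M -> f b = M -> False.
Proof.
move=> ab aI bI fa fb.
have [a0 aL] := ccL aI; have [b0 bL] := ccL bI.
have sub z : z \in `]a, b[ -> z \in `]0, L[ by exact: sub_oo2.
case: (pselect (exists2 y, y \in `]a, b[ & f y < M)) => [[y yI fy]|H]; last first.
  apply: (Z1 ab aI bI) => x xI; apply/eqP; rewrite eq_le xsmax ?oo_cc ?sub //=.
  by rewrite leNgt; apply/negP => fx; apply: H; exists x.
have fcab : {within `[a, b], continuous f} := continuous_subspaceW (sub_cc a0 bL) fc.
have [d dI dmin] := EVT_min (ltW ab) fcab.
have fdy : f d <= f y := dmin _ (ooW yI).
have dI' : d \in `]a, b[.
  move: dI; rewrite !in_itv /= !le_eqVlt => /andP[/predU1P[ad|->] /predU1P[db|->]] //.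
  - by move: fdy; rewrite -ad fa leNgt fy.
  - by move: fdy; rewrite -ad fa leNgt fy.
  - by move: fdy; rewrite db fb leNgt fy.
have := derive1_at_min (ltW ab) (fun t tI => fd _ (sub t tI)) dI' (fun t tI => dmin _ (ooW tI)).
move/(@derive_val _ _ _ _ _ _ _); rewrite -derive1E => f'0.
have := Dineq (sub _ dI'); rewrite f'0 (_ : (0:R) ^+ 2 = 0) ?expr2 ?mulr0 // => Dle.
have fd0 := fpos _ (oo_cc (sub _ dI')).
have := M0 => M0'.
have fdM : f d < M by apply: le_lt_trans fdy fy.
have X : 0 < M * M - f d * f d by nra.
have := Kpos; nra.
Qed.

Lemma uniqM {x} : x \in `[0, L] -> x != xs -> f x < M.
Proof.
move=> xI xxs; rewrite lt_neqAle xsmax // andbT; apply/negP => /eqP fxM.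
case: (ltgtP x xs) xxs => // [xxs' _|xxs' _].
  exact: (dip xxs' xI xsI fxM).
exact: (dip xxs' xsI xI).
Qed.

Lemma nz {e} : e \in `]0, L[ -> e != xs -> derive1 f e != 0.
Proof.
move=> eI exs; apply/negP => /eqP e0.
have := Dineq eI; rewrite e0 (_ : (0:R) ^+ 2 = 0) ?expr2 ?mulr0 // => Dle.
have := uniqM (oo_cc eI) exs => fe.
have fe0 := fpos _ (oo_cc eI).
have := M0 => M0'.
have X : 0 < M * M - f e * f e by nra.
have := Kpos; nra.
Qed.

Lemma isd {z} : z \in `]0, L[ -> is_derive z 1 f (derive1 f z).
Proof. by move=> zI; rewrite derive1E; apply: derivableP; exact: fd. Qed.

Lemma sign_r {c} : c \in `]xs, L[ -> derive1 f c < 0.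
Proof.
move=> cI; have [xs0 xsL] := ccL xsI.
have cI' : c \in `]0, L[ by exact: sub_oo2 xs0 (lexx L) cI.
have cxs : xs < c by move: cI; rewrite in_itv /= => /andP[].
have [c0 cL] : 0 < c /\ c < L by move: cI'; rewrite in_itv /= => /andP[].
rewrite ltNge le_eqVlt negb_or eq_sym (nz cI') ?gt_eqF //=; apply/negP => fpc.
have fcxc : {within `[xs, c], continuous f}.
  by apply: continuous_subspaceW fc; apply: sub_cc => //; apply: ltW; move: cI'; rewrite in_itv /= => /andP[].
have [d dI dE] := MVT cxs (fun z zI => isd (sub_oo2 xs0 (ltW cL) zI)) fcxc.
have fcl := uniqM (oo_cc cI') (negbT (gt_eqF cxs)).
have fdn : derive1 f d < 0.
  have : derive1 f d * (c - xs) < 0 by rewrite -dE subr_lt0.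
  by rewrite pmulr_llt0 // subr_gt0.
have dxs : xs < d by move: dI; rewrite in_itv /= => /andP[].
have dc : d < c by move: dI; rewrite in_itv /= => /andP[].
have sub z : z \in `[d, c] -> z \in `]0, L[.
  apply: sub_cc2; first exact: le_lt_trans dxs.
  by move: cI'; rewrite in_itv /= => /andP[].
have f'c : {within `[d, c], continuous (derive1 f)}.
  by apply: derivable_within_continuous => z zI; exact: fdd _ (sub _ zI).
have hv : Num.min (derive1 f d) (derive1 f c) <= 0 <= Num.max (derive1 f d) (derive1 f c).
  by rewrite ge_min le_max; apply/andP; split; apply/orP; [left; exact: ltW | right; exact: ltW].
have [e eI e0] := IVT (ltW dc) f'c hv.
case: (eqVneq e xs) => [exs|exs].
  by move: eI; rewrite in_itv /= exs leNgt dxs.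
by move: (nz (sub _ eI) exs); rewrite e0 eqxx.
Qed.

Lemma sign_l {c} : c \in `]0, xs[ -> 0 < derive1 f c.
Proof.
move=> cI; have [xs0 xsL] := ccL xsI.
have cI' : c \in `]0, L[ by exact: sub_oo2 (lexx 0) xsL cI.
have cxs : c < xs by move: cI; rewrite in_itv /= => /andP[].
have [c0 cL] : 0 < c /\ c < L by move: cI'; rewrite in_itv /= => /andP[].
rewrite ltNge le_eqVlt negb_or (nz cI') ?lt_eqF //=; apply/negP => fpc.
have fcxc : {within `[c, xs], continuous f}.
  by apply: continuous_subspaceW fc; apply: sub_cc => //; apply: ltW; move: cI'; rewrite in_itv /= => /andP[].
have [d dI dE] := MVT cxs (fun z zI => isd (sub_oo2 (ltW c0) xsL zI)) fcxc.
have fcl := uniqM (oo_cc cI') (negbT (lt_eqF cxs)).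
have fdn : 0 < derive1 f d.
  have : 0 < derive1 f d * (xs - c) by rewrite -dE subr_gt0.
  by rewrite pmulr_lgt0 // subr_gt0.
have dxs : d < xs by move: dI; rewrite in_itv /= => /andP[].
have dc : c < d by move: dI; rewrite in_itv /= => /andP[].
have sub z : z \in `[c, d] -> z \in `]0, L[.
  apply: sub_cc2; first by move: cI'; rewrite in_itv /= => /andP[].
  exact: lt_le_trans dxs xsL.
have f'c : {within `[c, d], continuous (derive1 f)}.
  by apply: derivable_within_continuous => z zI; exact: fdd _ (sub _ zI).
have hv : Num.min (derive1 f c) (derive1 f d) <= 0 <= Num.max (derive1 f c) (derive1 f d).
  by rewrite ge_min le_max; apply/andP; split; apply/orP; [left; exact: ltW | right; exact: ltW].
have [e eI e0] := IVT (ltW dc) f'c hv.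
case: (eqVneq e xs) => [exs|exs].
  by move: eI; rewrite in_itv /= exs => /andP[_]; rewrite leNgt dxs.
by move: (nz (sub _ eI) exs); rewrite e0 eqxx.
Qed.


Let k := Num.sqrt K.
Let gM x := M^-1 * f x.

Lemma gM_in {x} : x \in `[0, L] -> x != xs -> 0 < gM x < 1.
Proof.
move=> xI xxs; have fx0 := fpos _ xI; have := M0 => M0'.
rewrite /gM mulr_gt0 ?invr_gt0 //= mulrC ltr_pdivrMr // mul1r.
exact: uniqM.
Qed.

Lemma bound_d {c} : c \in `]0, L[ -> c != xs ->
  k * Num.sqrt (1 - gM c ^+ 2) * M <= `|derive1 f c|.
Proof.
move=> cI cxs; have := M0 => M0'.
have /andP[g0 g1] := gM_in (oo_cc cI) cxs.
have S0 : 0 <= 1 - gM c ^+ 2 by rewrite subr_ge0 expr_le1 // ltW.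
have -> : k * Num.sqrt (1 - gM c ^+ 2) * M = Num.sqrt (K * (1 - gM c ^+ 2) * M ^+ 2).
  have K0 : 0 <= K by exact: ltW.
  have KS : 0 <= K * (1 - gM c ^+ 2) by exact: mulr_ge0.
  rewrite (sqrtrM _ KS) (sqrtrM _ K0) sqrtr_sqr gtr0_norm //.
rewrite -sqrtr_sqr ler_sqrt ?sqr_ge0 //.
apply: le_trans (Dineq cI); rewrite /gM -mulrA; apply: ler_wpM2l; first exact: ltW.
have Mn0 : M != 0 by rewrite gt_eqF.
by rewrite le_eqVlt; apply/orP; left; apply/eqP; field.
Qed.

Lemma acos_le_pihalf (x : R) : 0 <= x <= 1 -> acos x <= pi / 2.
Proof.
move=> /andP[x0 x1].
have xI : x \in `[-1, 1] by rewrite in_itv /= x1 andbT (le_trans _ x0) // lerN10.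
rewrite leNgt; apply/negP => H.
have aI : acos x \in `[0, pi] by rewrite in_itv /= acos_ge0 ?acos_lepi // (le_trans _ x0) ?x1 // lerN10.
have pI : (pi : R) / 2 \in `[0, pi].
  have pi0 := pi_gt0 R.
  rewrite in_itv /=; apply/andP; split; first by rewrite divr_ge0 // ltW.
  rewrite ler_pdivrMr //; nra.
have := H; rewrite -(ltr_cos pI aI) acosK // cos_pihalf => /(le_lt_trans x0).
by rewrite ltxx.
Qed.

Lemma theta_cont {a b} : 0 <= a -> b <= L -> (forall x, x \in `[a, b] -> x != xs) ->
  {within `[a, b], continuous (fun x => acos (gM x))}.
Proof.
move=> a0 bL nxs; apply/subspace_continuousP => x xI.
have xI' : x \in `[a, b] by [].
have xI0 : x \in `[0, L] by exact: sub_cc a0 bL x xI.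
have /andP[g0 g1] := gM_in xI0 (nxs _ xI').
have hc : {for f x, continuous (fun y => acos (M^-1 * y))}.
  apply: (@continuous_comp _ _ _ (fun y => M^-1 * y) acos).
    have hd : derivable (M^-1 \*: (@id R)) (f x) 1.
      by apply: derivableZ; exact: derivable_id.
    by move/derivable1_diffP/differentiable_continuous: hd.
  by apply: continuous_acos; rewrite (lt_trans _ g0) ?ltrN10.
apply: (continuous_cvg _ hc).
have fc' : {within `[a, b], continuous f} := continuous_subspaceW (sub_cc a0 bL) fc.
exact: (@subspace_continuousP _ `[a, b]%classic _ f).1 fc' x xI.
Qed.

Lemma theta_deriv {z} : z \in `]0, L[ -> z != xs ->
  is_derive z 1 (fun x => acos (gM x))
    (- (Num.sqrt (1 - gM z ^+ 2))^-1 * (M^-1 * derive1 f z)).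
Proof.
move=> zI zxs.
have /andP[g0 g1] := gM_in (oo_cc zI) zxs.
have gI : -1 < gM z < 1 by rewrite g1 andbT (lt_trans _ g0) ?ltrN10.
have dg : is_derive z 1 (M^-1 \*: f) (M^-1 *: derive1 f z).
  by apply: is_deriveZ; exact: isd.
have dacos := is_derive1_acos gI.
have -> : (fun x => acos (gM x)) = acos \o (M^-1 \*: f) by [].
apply: DeriveDef.
  apply/derivable1_diffP; apply: differentiable_comp.
    by apply/derivable1_diffP; case: dg.
  by apply/derivable1_diffP; case: dacos.
rewrite -derive1E derive1_comp.
- rewrite !derive1E.
  have e1 := @derive_val _ _ _ _ _ _ _ dacos.
  have e2 := @derive_val _ _ _ _ _ _ _ dg.
  by rewrite e1 e2 -derive1E.
- by case: dg.
- by case: dacos.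
Qed.

Lemma df_bound {c} : c \in `]0, L[ -> c != xs ->
  k <= `|derive1 f c| / (Num.sqrt (1 - gM c ^+ 2) * M).
Proof.
move=> cI cxs; have := M0 => M0'.
have /andP[g0 g1] := gM_in (oo_cc cI) cxs.
have S0 : 0 < Num.sqrt (1 - gM c ^+ 2).
  by rewrite sqrtr_gt0 subr_gt0 expr_lt1 // ltW.
by rewrite ler_pdivlMr ?mulr_gt0 // mulrA; exact: bound_d.
Qed.

Lemma df_eq {c} : c \in `]0, L[ -> c != xs ->
  - (Num.sqrt (1 - gM c ^+ 2))^-1 * (M^-1 * derive1 f c) =
  - derive1 f c / (Num.sqrt (1 - gM c ^+ 2) * M).
Proof.
move=> cI cxs; have := M0 => M0'.
have /andP[g0 g1] := gM_in (oo_cc cI) cxs.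
have S0 : 0 < Num.sqrt (1 - gM c ^+ 2).
  by rewrite sqrtr_gt0 subr_gt0 expr_lt1 // ltW.
have Mn0 : M != 0 by rewrite gt_eqF.
have Sn0 : Num.sqrt (1 - gM c ^+ 2) != 0 by rewrite gt_eqF.
rewrite invfM; set S := Num.sqrt _; set d := derive1 f c.
by rewrite mulNr mulNr; congr (- _); ring.
Qed.

Lemma theta_r {s} : xs < s -> s < L -> k * (L - s) <= acos (gM L).
Proof.
move=> xss sL; have [xs0 xsL] := ccL xsI.
have s0 : 0 <= s by apply: le_trans xs0 (ltW xss).
have nxs x : x \in `[s, L] -> x != xs.
  by rewrite in_itv /= => /andP[sx _]; rewrite gt_eqF // (lt_le_trans xss sx).
have hc := theta_cont s0 (lexx L) nxs.
have hd z : z \in `]s, L[ -> is_derive z 1 (fun x => acos (gM x))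
    (- (Num.sqrt (1 - gM z ^+ 2))^-1 * (M^-1 * derive1 f z)).
  by move=> zI; apply: theta_deriv; [exact: sub_oo2 s0 (lexx L) zI | exact: nxs _ (ooW zI)].
have [c cI cE] := MVT sL hd hc.
have cI0 : c \in `]0, L[ by exact: sub_oo2 s0 (lexx L) cI.
have cxs := nxs _ (ooW cI).
have cI1 : c \in `]xs, L[.
  by move: cI; rewrite !in_itv /= => /andP[sc ->]; rewrite (lt_trans xss sc).
have dn := sign_r cI1.
have sI : s \in `[0, L] by rewrite in_itv /= s0 (ltW sL).
have sIs : s \in `[s, L] by rewrite in_itv /= lexx (ltW sL).
have /andP[g0 g1] := gM_in sI (nxs _ sIs).
have a0 : 0 <= acos (gM s).
  by apply: acos_ge0; rewrite (le_trans _ (ltW g0)) ?lerN10 ?ltW.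
have dfk := df_bound cI0 cxs; rewrite ltr0_norm // in dfk.
rewrite df_eq // in cE.
have H : k * (L - s) <= - derive1 f c / (Num.sqrt (1 - gM c ^+ 2) * M) * (L - s).
  by apply: ler_wpM2r; [rewrite subr_ge0 ltW | exact: dfk].
move: cE H; set X := _ / _; lra.
Qed.

Lemma theta_l {t} : 0 < t -> t < xs -> k * t <= acos (gM 0).
Proof.
move=> t0 txs; have [xs0 xsL] := ccL xsI.
have tL : t <= L by apply: ltW; apply: lt_le_trans xsL.
have nxs x : x \in `[0, t] -> x != xs.
  by rewrite in_itv /= => /andP[_ xt]; rewrite lt_eqF // (le_lt_trans xt txs).
have hc := theta_cont (lexx 0) tL nxs.
have hd z : z \in `]0, t[ -> is_derive z 1 (fun x => acos (gM x))
    (- (Num.sqrt (1 - gM z ^+ 2))^-1 * (M^-1 * derive1 f z)).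
  by move=> zI; apply: theta_deriv; [exact: sub_oo2 (lexx 0) tL zI | exact: nxs _ (ooW zI)].
have [c cI cE] := MVT t0 hd hc.
have cI0 : c \in `]0, L[ by exact: sub_oo2 (lexx 0) tL cI.
have cxs := nxs _ (ooW cI).
have cI1 : c \in `]0, xs[.
  by move: cI; rewrite !in_itv /= => /andP[-> ct]; rewrite (lt_trans ct txs).
have dp := sign_l cI1.
have tI : t \in `[0, L] by rewrite in_itv /= ltW.
have tIs : t \in `[0, t] by rewrite in_itv /= lexx ltW.
have /andP[g0 g1] := gM_in tI (nxs _ tIs).
have a0 : 0 <= acos (gM t).
  by apply: acos_ge0; rewrite (le_trans _ (ltW g0)) ?lerN10 ?ltW.
have dfk := df_bound cI0 cxs; rewrite gtr0_norm // in dfk.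
rewrite df_eq // in cE.
have H : k * t <= derive1 f c / (Num.sqrt (1 - gM c ^+ 2) * M) * t.
  by apply: ler_wpM2r; [rewrite ltW | exact: dfk].
move: cE H; rewrite subr0 mulNr; set X := _ / _; lra.
Qed.

Lemma gM_01 {x} : x \in `[0, L] -> 0 <= gM x <= 1.
Proof.
move=> xI; have fx0 := fpos _ xI; have := M0 => M0'.
rewrite /gM; apply/andP; split; first by apply: mulr_ge0; [rewrite invr_ge0 ltW | exact: ltW].
by rewrite mulrC ler_pdivrMr // mul1r; exact: xsmax.
Qed.

Lemma core_contra : False.
Proof.
have k0 : 0 < k by rewrite sqrtr_gt0.
have pi0 := pi_gt0 R.
have h2 : (k * L) ^+ 2 = K * L ^+ 2 by rewrite exprMn sqr_sqrtr // ltW.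
have kL : pi < k * L.
  rewrite ltNge; apply/negP => H.
  have : (k * L) ^+ 2 <= pi ^+ 2.
    have kL0 : 0 <= k * L by rewrite mulr_ge0 // ltW.
    by rewrite !expr2; nra.
  rewrite h2 => H2; move: KL; rewrite ltNge H2 //.
set q := pi / (2 * k).
have kq : k * q = pi / 2 by rewrite /q; field; rewrite gt_eqF.
have [xs0 xsL] := ccL xsI.
have LI : L \in `[0, L] by rewrite in_itv /= lexx ltW.
have OI : 0 \in `[0, L] by rewrite in_itv /= lexx ltW.
case: (leP xs (L / 2)) => hx.
  have kxs : k * xs <= k * (L / 2) by rewrite ler_wpM2l // ltW.
  have xss : xs < xs + (L / 2 - q) / 2 by nra.
  have sL : xs + (L / 2 - q) / 2 < L by nra.
  have := theta_r xss sL.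
  have := acos_le_pihalf _ (gM_01 LI).
  nra.
have kxs : k * (L / 2) <= k * xs by rewrite ler_wpM2l // ltW.
have t0 : 0 < xs - (L / 2 - q) / 2 by nra.
have txs : xs - (L / 2 - q) / 2 < xs by nra.
have := theta_l t0 txs.
have := acos_le_pihalf _ (gM_01 OI).
nra.
Qed.
End Max.
End Core.

Lemma core (R : realType) (f : R -> R) (L p lam x0 : R) :
  0 < L -> 2 < p -> {within `[0, L], continuous f} ->
  (forall x, x \in `]0, L[ -> derivable f x 1) ->
  (forall x, x \in `]0, L[ -> derivable (derive1 f) x 1) ->
  (forall x, x \in `]0, L[ -> derive1 (derive1 f) x + f x `^ (p - 1) = lam * f x) ->
  (forall x, x \in `[0, L] -> 0 < f x) ->
  x0 \in `[0, L] -> pi ^+ 2 < (2 / p * f x0 `^ (p - 2) - lam) * L ^+ 2 -> False.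
Proof.
move=> Lpos p2 fc fd fdd fode fpos x0I H.
have [xs xsI xsmax] := EVT_max (ltW Lpos) fc.
have p0 : 0 < 2 / p by rewrite divr_gt0 // (lt_trans _ p2).
have K0K : 2 / p * f x0 `^ (p - 2) - lam <= 2 / p * f xs `^ (p - 2) - lam.
  rewrite lerD2r; apply: ler_wpM2l; first exact: ltW.
  apply: ge0_ler_powR.
  - by rewrite subr_ge0 ltW.
  - by rewrite nnegrE ltW // fpos.
  - by rewrite nnegrE ltW // fpos.
  - exact: xsmax.
have L2 : 0 < L ^+ 2 by rewrite exprn_gt0.
have pi2 : 0 < (pi : R) ^+ 2 by rewrite exprn_gt0 // pi_gt0.
have KL : pi ^+ 2 < (2 / p * f xs `^ (p - 2) - lam) * L ^+ 2.
  by apply: lt_le_trans H _; apply: ler_wpM2r => //; exact: ltW.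
have Kpos : 0 < 2 / p * f xs `^ (p - 2) - lam.
  by move: KL; set K := (_ - lam) => KL; nra.
exact: (@core_contra R f L p lam Lpos p2 fc fd fdd fode fpos xs xsI xsmax Kpos KL).
Qed.

Theorem lemma2p5 (R : realType) (V : Type) (E : countType)
  (len : E -> \bar R) (orig term : E -> V) (p lambda : R) (u : E -> R -> R) :
  2 < p ->
  in_class_G len orig term ->
  H1_graph len orig term u ->
  (forall e x, edge_set len e x -> 0 < u e x) ->
  solves_NLS len u p lambda ->
  kirchhoff len orig term u ->
  let B := p / 2 * lambda +
           (if e0 len is r%:E then p * pi ^+ 2 / (2 * r ^+ 2) else 0) in
  0 < B /\ (forall e x, edge_set len e x -> u e x <= B `^ (p - 2)^-1).
Proof.
move=> p2 [En0 lenpos conn degs e0pos] [uc _ _] upos nls _ B.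
have p0 : 0 < p by rewrite (lt_trans _ p2).
have pi0 := pi_gt0 R.
have hB : forall m : R, B < m -> 0 < 2 / p * m - lambda /\
    (forall r0, e0 len = r0%:E -> pi ^+ 2 < (2 / p * m - lambda) * r0 ^+ 2).
  move=> m; rewrite /B; case E0 : (e0 len) => [r0| |] Bm.
  - have r00 : 0 < r0 by move: e0pos; rewrite E0 lte_fin.
    have h : pi ^+ 2 / r0 ^+ 2 < 2 / p * m - lambda.
      have h1 := Bm; rewrite -(ltr_pM2l (divr_gt0 (ltr0n _ 2) p0)) in h1.
      have -> : pi ^+ 2 / r0 ^+ 2 = 2 / p * (p / 2 * lambda + p * pi ^+ 2 / (2 * r0 ^+ 2)) - lambda.
        by field; rewrite ?gt_eqF.
      by rewrite ltrD2r.
    have hpos : 0 < pi ^+ 2 / r0 ^+ 2 by rewrite divr_gt0 // exprn_gt0.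
    split; first exact: lt_trans hpos h.
    move=> r1 [<-]; rewrite -ltr_pdivrMr ?exprn_gt0 //.
  - split => //.
    have h1 := Bm; rewrite -(ltr_pM2l (divr_gt0 (ltr0n _ 2) p0)) in h1.
    move: h1; rewrite addr0 mulrA.
    have -> : 2 / p * (p / 2) = 1 by field; rewrite gt_eqF.
    by rewrite mul1r subr_gt0.
  - by move: e0pos; rewrite E0.
have key : forall e x, edge_set len e x -> u e x `^ (p - 2) <= B.
  move=> e x xe; rewrite leNgt; apply/negP => Bm.
  have [K0pos K0r] := hB _ Bm.
  set K0 := 2 / p * u e x `^ (p - 2) - lambda in K0pos K0r.
  have e0le : (e0 len <= len e)%E by apply: ereal_inf_lbound; exists e.
  case: xe => x0 xle.
  have fd L z : (L%:E <= len e)%E -> z \in `]0, L[ -> edge_int len e z.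
    move=> Ll; rewrite in_itv /= => /andP[z0 zL]; split => //.
    by apply: lt_le_trans Ll; rewrite lte_fin.
  have fs L z : (L%:E <= len e)%E -> z \in `[0, L] -> edge_set len e z.
    move=> Ll; rewrite in_itv /= => /andP[z0 zL]; split => //.
    by apply: le_trans Ll; rewrite lee_fin.
  have apply_core L : 0 < L -> (L%:E <= len e)%E -> x <= L ->
      pi ^+ 2 < K0 * L ^+ 2 -> False.
    move=> Lpos Ll xL HL.
    apply: (@core R (u e) L p lambda x Lpos p2).
    - apply: continuous_subspaceW (uc e) => z /= zI; exact: fs Ll zI.
    - by move=> z zI; have [] := nls e z (fd L z Ll zI).
    - by move=> z zI; have [] := nls e z (fd L z Ll zI).
    - by move=> z zI; have [] := nls e z (fd L z Ll zI).
    - by move=> z zI; apply: upos; exact: fs Ll zI.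
    - by rewrite in_itv /= x0 xL.
    - exact: HL.
  case Ele : (len e) => [r| |] in e0le xle fd fs apply_core.
  - have r0 : 0 < r by have := lenpos e; rewrite Ele lte_fin.
    case E0 : (e0 len) => [r1| |] in e0le K0r.
    + have := K0r r1 erefl => Hr1.
      have r10 : 0 < r1 by move: e0pos; rewrite E0 lte_fin.
      have r1r : r1 <= r by rewrite -lee_fin.
      apply: (apply_core r r0 (lexx _)); first by rewrite -lee_fin.
      apply: (lt_le_trans Hr1); apply: ler_wpM2l; first exact: ltW.
      by rewrite ler_pXn2r // nnegrE ltW.
    + by [].
    + by move: e0pos; rewrite E0.
  - set L := x + 1 + pi ^+ 2 / K0.
    have q0 : 0 <= pi ^+ 2 / K0 by rewrite divr_ge0 ?sqr_ge0 // ltW.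
    have L1 : 1 <= L by rewrite /L; lra.
    have KL : pi ^+ 2 < K0 * L.
      have -> : K0 * L = K0 * x + K0 + pi ^+ 2 by rewrite /L; field; rewrite gt_eqF.
      have : 0 <= K0 * x by rewrite mulr_ge0 // ltW.
      lra.
    apply: (apply_core L); [exact: lt_le_trans ltr01 L1 | by rewrite leey | |].
    + rewrite /L; lra.
    + apply: (lt_le_trans KL); rewrite expr2 mulrA ler_peMr //.
      by rewrite mulr_ge0 ?ltW // (lt_le_trans ltr01 L1).
  - by move: (lenpos e); rewrite Ele.
split.
  have [e _] := En0.
  have e0 : edge_set len e 0 by split => //; apply: ltW; exact: lenpos.
  apply: lt_le_trans (key e 0 e0).
  by apply: powR_gt0; exact: upos.
move=> e x xe.
have ux := upos e x xe.
have pn : p - 2 != 0 by rewrite subr_eq0 gt_eqF.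
have -> : u e x = (u e x `^ (p - 2)) `^ (p - 2)^-1.
  by rewrite -powRrM mulfV // powRr1 // ltW.
apply: ge0_ler_powR.
- by rewrite invr_ge0 subr_ge0 ltW.
- by rewrite nnegrE powR_ge0.
- by rewrite nnegrE (le_trans (powR_ge0 _ _) (key e x xe)).
- exact: key.
Qed.
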